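(* Let $R:K\to H$ be a Yetter--Drinfeld relative Rota--Baxter operator on the Hopf algebra $(H,\cdot,1,\Delta,\epsilon,S_H)$ with respect to $(K,\rightharpoonup)$. Define $S_K:K\to K$ by $S_K(a):=R(a_1)\rightharpoonup R^{-1}\big(S_H(R(a_2))\big)$. Then $S_K(a_1)\cdot_K a_2=\epsilon(a)1_K=a_1\cdot_K S_K(a_2)$ for all $a\in K$; consequently $K$ is a Hopf monoid in ${}^H_H\mathcal{YD}$ with antipode $S_K$.
   Context: Conventions: $\Bbbk$ is a field; algebras are associative unital, coalgebras coassociative counital; Sweedler notation $\Delta(c)=c_1\otimes c_2$ (summation omitted), iterated as $c_1\otimes c_2\otimes c_3$ etc. Yetter--Drinfeld modules: for a Hopf algebra $A$ with antipode $T$, a left-left Yetter--Drinfeld module is a left $A$-module $(V,\triangleright)$ and left $A$-comodule $\rho(v)=v_{-1}\otimes v_0$ with $\rho(a\triangleright v)=a_1v_{-1}T(a_3)\otimes a_2\triangleright v_0$; these form the braided monoidal category ${}^A_A\mathcal{YD}$ with braiding $\sigma(v\otimes w)=v_{-1}\triangleright w\otimes v_0$. A bimonoid in ${}^A_A\mathcal{YD}$ is an object with algebra and coalgebra structure maps in ${}^A_A\mathcal{YD}$, $\epsilon$ multiplicative, $\epsilon(1)=1$, $\Delta(1)=1\otimes1$, and $\Delta\circ m=(m\otimes m)(\mathrm{Id}\otimes\sigma\otimes\mathrm{Id})(\Delta\otimes\Delta)$; a Hopf monoid is a bimonoid with antipode (convolution inverse of the identity). Definition (Yetter--Drinfeld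 relative (pre-)Rota--Baxter operator). Let $(H,\cdot,1,\Delta,\epsilon,S_H)$ be a Hopf algebra and $(K,\cdot_K,1_K,\Delta,\epsilon)$ a bimonoid in ${}^H_H\mathcal{YD}$ with $H$-action $\rightharpoonup$. A coalgebra morphism $R:K\to H$ is a Yetter--Drinfeld relative pre-Rota--Baxter operator if for all $a,b\in K$: (RB1) $R(a)\cdot R(b)=R\big(a_1\cdot_K(R(a_2)\rightharpoonup b)\big)$; (RB2) $S_HR(R(a_1)\rightharpoonup b_1)\cdot R(a_2)\cdot R(b_2)\otimes R(R(a_3)\rightharpoonup b_3)=S_HR(R(a_2)\rightharpoonup b_2)\cdot R(a_3)\cdot R(b_3)\otimes R(R(a_1)\rightharpoonup b_1)$. It is a Yetter--Drinfeld relative Rota--Baxter operator if moreover $R$ is bijective and (RB3) $\big(a_1\rightharpoonup R^{-1}S_H(a_2)\big)\cdot_K R^{-1}(a_3)=\epsilon(a)1_K$ for all $a\in H$. *)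

(* Defs.v *)
(* Hopf algebras / Yetter--Drinfeld modules over a field k,
   with tensors represented as finite lists of pairs (formal sums
   sum_i x_i (x) y_i) compared via the equality of the tensor product
   (two formal sums are equal in V (x) W iff all functionals phi (x) psi,
   phi in V^*, psi in W^*, agree on them -- which holds over a field). *)
From HB Require Import structures.
From mathcomp Require Import all_boot all_order all_algebra.
Set Implicit Arguments. Unset Strict Implicit. Unset Printing Implicit Defensive.
Import GRing.Theory.
Local Open Scope ring_scope.

Section YD.
Variable k : fieldType.

Definition teq2 (U V : lmodType k) (s t : seq (U * V)) : Prop :=
  forall (f : {linear U -> k^o}) (g : {linear V -> k^o}),
    \sum_(p <- s) (f p.1 : k) * g p.2 = \sum_(p <- t) (f p.1 : k) * g p.2.

Definition teq3 (U V W : lmodType k) (s t : seq (U * V * W)) : Prop :=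
  forall (f : {linear U -> k^o}) (g : {linear V -> k^o}) (h : {linear W -> k^o}),
    \sum_(p <- s) (f p.1.1 : k) * g p.1.2 * h p.2
    = \sum_(p <- t) (f p.1.1 : k) * g p.1.2 * h p.2.

Definition tlinear (U V W : lmodType k) (d : U -> seq (V * W)) : Prop :=
  forall (c : k) (x y : U),
    teq2 (d (c *: x + y)) ([seq (c *: p.1, p.2) | p <- d x] ++ d y).

Definition lin (U V : lmodType k) (f : U -> V) : Prop :=
  forall (c : k) (x y : U), f (c *: x + y) = c *: f x + f y.

Definition linf (U : lmodType k) (f : U -> k) : Prop :=
  forall (c : k) (x y : U), f (c *: x + y) = c * f x + f y.

(* (Delta (x) id) Delta c, as triples ((c_1, c_2), c_3) *)
Definition sw3 (V : lmodType k) (d : V -> seq (V * V)) (c : V) : seq (V * V * V) :=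
  flatten [seq [seq (q.1, q.2, p.2) | q <- d p.1] | p <- d c].

Definition is_coalg (V : lmodType k) (d : V -> seq (V * V)) (e : V -> k) : Prop :=
  [/\ tlinear d, linf e,
      (forall c, teq3 (sw3 d c)
                      (flatten [seq [seq (p.1, q.1, q.2) | q <- d p.2] | p <- d c])),
      (forall c, \sum_(p <- d c) e p.1 *: p.2 = c) &
      (forall c, \sum_(p <- d c) e p.2 *: p.1 = c)].

Record hopf_data (H : algType k) := HopfData {
  hdelta : H -> seq (H * H);
  heps : H -> k;
  hS : H -> H }.

Definition is_hopf_alg (H : algType k) (D : hopf_data H) : Prop :=
  let d := hdelta D in let e := heps D in let S := hS D in
  [/\ is_coalg d e,
      (forall a b : H, teq2 (d (a * b))
                            [seq (p.1 * q.1, p.2 * q.2) | p <- d a, q <- d b]),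
      [/\ teq2 (d 1) [:: (1, 1)],
      (forall a b : H, e (a * b) = e a * e b) & e 1 = 1],
      lin S &
      (forall a : H, \sum_(p <- d a) S p.1 * p.2 = (e a)%:A
                  /\ \sum_(p <- d a) p.1 * S p.2 = (e a)%:A)].

Definition is_YD_module (H : algType k) (D : hopf_data H) (V : lmodType k)
    (act : H -> V -> V) (coact : V -> seq (H * V)) : Prop :=
  [/\ [/\ (forall (c : k) (h h' : H) (v : V), act (c *: h + h') v = c *: act h v + act h' v),
      (forall h : H, lin (act h)),
      (forall v, act 1 v = v) &
      (forall h h' v, act (h * h') v = act h (act h' v))],
      tlinear coact,
      (forall v, teq3 (flatten [seq [seq (q.1, q.2, p.2) | q <- hdelta D p.1] | p <- coact v])
                      (flatten [seq [seq (p.1, q.1, q.2) | q <- coact p.2] | p <- coact v])),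
      (forall v, \sum_(p <- coact v) heps D p.1 *: p.2 = v) &
      (forall h v, teq2 (coact (act h v))
          [seq (t.1.1 * p.1 * hS D t.2, act t.1.2 p.2) | t <- sw3 (hdelta D) h, p <- coact v])].

Record ydbim_data (H K : algType k) := YDBimData {
  kact : H -> K -> K;
  kcoact : K -> seq (H * K);
  kdelta : K -> seq (K * K);
  keps : K -> k }.

Definition is_YD_bimonoid (H : algType k) (D : hopf_data H) (K : algType k)
    (E : ydbim_data H K) : Prop :=
  let act := kact E in let rho := kcoact E in
  let d := kdelta E in let e := keps E in
  [/\ is_YD_module D act rho,
      is_coalg d e,
      [/\ (forall h (a b : K), act h (a * b) = \sum_(p <- hdelta D h) act p.1 a * act p.2 b),
          (forall h, act h 1 = heps D h *: 1),
          (forall a b : K, teq2 (rho (a * b))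
                              [seq (p.1 * q.1, p.2 * q.2) | p <- rho a, q <- rho b]) &
          teq2 (rho 1) [:: (1, 1)]],
      [/\ (forall h a, teq2 (d (act h a))
                            [seq (act p.1 q.1, act p.2 q.2) | p <- hdelta D h, q <- d a]),
          (forall a, teq3 (flatten [seq [seq (p.1, q.1, q.2) | q <- d p.2] | p <- rho a])
                          (flatten [seq [seq (x.1 * y.1, x.2, y.2) | x <- rho q.1, y <- rho q.2]
                                    | q <- d a])),
          (forall h a, e (act h a) = heps D h * e a) &
          (forall a, \sum_(p <- rho a) e p.2 *: p.1 = (e a)%:A)] &
      [/\ (forall a b : K, e (a * b) = e a * e b), e 1 = 1, teq2 (d 1) [:: (1, 1)] &
          (forall a b : K, teq2 (d (a * b))
              (flatten [seq [seq (p.1 * act r.1 q.1, r.2 * q.2) | r <- rho p.2, q <- d b]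
                        | p <- d a]))]].

Definition is_YD_hopf_monoid (H : algType k) (D : hopf_data H) (K : algType k)
    (E : ydbim_data H K) (SK : K -> K) : Prop :=
  [/\ is_YD_bimonoid D E, lin SK &
      forall a : K, \sum_(p <- kdelta E a) SK p.1 * p.2 = keps E a *: 1
                 /\ \sum_(p <- kdelta E a) p.1 * SK p.2 = keps E a *: 1].

Definition is_YD_rel_preRB (H : algType k) (D : hopf_data H) (K : algType k)
    (E : ydbim_data H K) (R : K -> H) : Prop :=
  let act := kact E in let dK := kdelta E in let S := hS D in
  [/\ lin R,
      (forall a, teq2 (hdelta D (R a)) [seq (R p.1, R p.2) | p <- dK a]),
      (forall a, heps D (R a) = keps E a),
      (forall a b : K, R a * R b = R (\sum_(p <- dK a) p.1 * act (R p.2) b)) &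
      (forall a b : K, teq2
         [seq (S (R (act (R t.1.1) u.1.1)) * R t.1.2 * R u.1.2, R (act (R t.2) u.2))
            | t <- sw3 dK a, u <- sw3 dK b]
         [seq (S (R (act (R t.1.2) u.1.2)) * R t.2 * R u.2, R (act (R t.1.1) u.1.1))
            | t <- sw3 dK a, u <- sw3 dK b])].

Definition is_YD_rel_RB (H : algType k) (D : hopf_data H) (K : algType k)
    (E : ydbim_data H K) (R : K -> H) (Rinv : H -> K) : Prop :=
  [/\ is_YD_rel_preRB D E R, cancel R Rinv, cancel Rinv R &
      (forall h : H, \sum_(t <- sw3 (hdelta D) h)
                        kact E t.1.1 (Rinv (hS D t.1.2)) * Rinv t.2 = heps D h *: 1)].

Definition YD_SK (H : algType k) (D : hopf_data H) (K : algType k)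
    (E : ydbim_data H K) (R : K -> H) (Rinv : H -> K) (a : K) : K :=
  \sum_(p <- kdelta E a) kact E (R p.1) (Rinv (hS D (R p.2))).

End YD.

(* Main.v *)
From HB Require Import structures.
Require Import Defs.
From mathcomp Require Import all_boot all_order all_algebra.
From mathcomp Require Import boolp classical_sets.
From mathcomp Require Import ring.
Set Implicit Arguments.
Import GRing.Theory.
Local Open Scope ring_scope.

Section Sep.
Local Open Scope classical_set_scope.
Context {k : fieldType} {U : lmodType k}.

Definition subsp (W : U -> Prop) :=
  W 0 /\ (forall (c : k) u v, W u -> W v -> W (c *: u + v)).

Lemma subspZ W c u : subsp W -> W u -> W (c *: u).
Proof. by move=> [W0 Wc] Wu; rewrite -[c *: u]addr0; apply: Wc. Qed.
Lemma subspD W u v : subsp W -> W u -> W v -> W (u + v).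
Proof. by move=> [W0 Wc] Wu Wv; rewrite -[u]scale1r; apply: Wc. Qed.
Lemma subspB W u v : subsp W -> W u -> W v -> W (u - v).
Proof.
move=> sW Wu Wv; rewrite addrC -scaleN1r; apply: (proj2 sW) => //.
Qed.

Lemma sep_fun (W : U -> Prop) (x : U) : subsp W -> ~ W x ->
  exists f : U -> k, (forall (c : k) y z, f (c *: y + z) = c * f y + f z)
     /\ f x = 1 /\ (forall w, W w -> f w = 0).
Proof.
move=> sW nWx.
pose Q (X : set U) := subsp X /\ (forall w, W w -> X w) /\ ~ X x.
pose P (X : set U) := X = set0 \/ Q X.
have [A [PA Amax]] : exists A, P A /\ forall B, A `<` B -> ~ P B.
  apply: Zorn_bigcup => F FP Ftot.
  have [[X0 [FX0 QX0]]|noQ] := pselect (exists X0, F X0 /\ Q X0); last first.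
    left; apply/seteqP; split => // t [X FX Xt].
    have [X0|QX] := FP X FX; first by rewrite X0 in Xt.
    by exfalso; apply: noQ; exists X.
  have QY : forall Y, F Y -> (exists t, Y t) -> Q Y.
    move=> Y FY [t Yt]; have [Y0|//] := FP Y FY.
    by rewrite Y0 in Yt.
  right; split; [split|split].
  - by exists X0 => //; exact: QX0.1.1.
  - move=> c u v [X1 F1 X1u] [X2 F2 X2v].
    have [S12|S21] := Ftot _ _ F1 F2.
    + exists X2 => //; apply: (QY X2 F2 (ex_intro _ v X2v)).1.2 => //.
      exact: S12.
    + exists X1 => //; apply: (QY X1 F1 (ex_intro _ u X1u)).1.2 => //.
      exact: S21.
  - by move=> w Ww; exists X0 => //; apply: QX0.2.1.
  - by move=> [X FX Xx]; apply: (QY X FX (ex_intro _ x Xx)).2.2.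
have QA : Q A.
  case: PA => // A0; exfalso; apply: (Amax W).
    rewrite A0; split => // /(_ 0) H; exact: H sW.1.
  by right; split => //; split.
case: QA => sA [WA nAx].
have ex : forall z, exists c, A (z - c *: x).
  move=> z; apply: contrapT => nex.
  pose B (v : U) := exists m c, A m /\ v = m + c *: z.
  apply: (Amax B); last first.
    right; split; [split|split].
    - by exists 0, 0; rewrite scale0r addr0; split => //; exact: sA.1.
    - move=> c u v [m1 [c1 [Am1 ->]]] [m2 [c2 [Am2 ->]]].
      exists (c *: m1 + m2), (c * c1 + c2); split; first exact: sA.2.
      by rewrite scalerDr scalerDl scalerA addrACA.
    - by move=> w Ww; exists w, 0; rewrite scale0r addr0; split => //; exact: WA.
    - move=> [m [c [Am xE]]].
      have [c0|cn0] := eqVneq c 0.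
        by apply: nAx; rewrite xE c0 scale0r addr0.
      apply: nex; exists c^-1; rewrite xE scalerDr scalerA mulVf // scale1r.
      rewrite opprD addrA.
      rewrite addrC addrA [X in X + _]addrC subrr add0r -scaleNr; exact: (@subspZ A).
  split; first by move=> m Am; exists m, 0; rewrite scale0r addr0.
  move=> /(_ z) H; apply: nex; exists 0; rewrite scale0r subr0; apply: H.
  by exists 0, 1; rewrite scale1r add0r; split => //; exact: sA.1.
have uniq : forall z c c', A (z - c *: x) -> A (z - c' *: x) -> c = c'.
  move=> z c c' A1 A2; apply: contrapT => /eqP ncc.
  have : A ((c' - c) *: x).
    have := @subspB A _ _ sA A1 A2. by rewrite opprB addrC addrA subrK scalerBl.
  move=> /(@subspZ A (c' - c)^-1 _ sA); rewrite scalerA mulVf ?subr_eq0 1?eq_sym //.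
  by rewrite scale1r.
pose f z := xget 0 (fun c => A (z - c *: x)).
have fP z : A (z - f z *: x) by apply: (@xgetPex k 0 (fun c => A (z - c *: x))); exact: ex.
exists f; split; [|split].
- move=> c y z; apply: uniq (fP _) _.
  have -> : c *: y + z - (c * f y + f z) *: x = c *: (y - f y *: x) + (z - f z *: x).
    by rewrite scalerDl scalerBr scalerA opprD addrACA.
  exact: sA.2.
- by apply: (uniq x) (fP x) _; rewrite scale1r subrr; exact: sA.1.
- by move=> w Ww; apply: (uniq w) (fP w) _; rewrite scale0r subr0; exact: WA.
Qed.
End Sep.

Section MkLin.
Variables (k : fieldType) (U : lmodType k) (f : U -> k)
  (fL : forall (c : k) (x y : U), f (c *: x + y) = c * f x + f y).
Definition mkf : U -> k^o := f.
Lemma mkf_lin : linear mkf.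
Proof. by move=> c x y; rewrite /mkf fL. Qed.
HB.instance Definition _ := GRing.isLinear.Build k U k^o *:%R mkf mkf_lin.
Definition mklin : {linear U -> k^o} := mkf.
Lemma mklinE x : mklin x = f x. Proof. by []. Qed.
End MkLin.

Section Lin.
Variables (k : fieldType) (U V : lmodType k) (f : U -> V) (hf : lin f).
Lemma lin0 : f 0 = 0.
Proof.
have := hf 1 0 0; rewrite scale1r !addr0 => /(congr1 (fun v => v - f 0)).
by rewrite subrr addrK scale1r => ->.
Qed.
Lemma linD x y : f (x + y) = f x + f y.
Proof. by rewrite -{1}[x]scale1r hf scale1r. Qed.
Lemma linZ c x : f (c *: x) = c *: f x.
Proof. by rewrite -[c *: x]addr0 hf lin0 addr0. Qed.
Lemma linN x : f (- x) = - f x.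
Proof. by rewrite -scaleN1r linZ scaleN1r. Qed.
Lemma linB x y : f (x - y) = f x - f y.
Proof. by rewrite linD linN. Qed.
Lemma lin_sum (I : Type) (r : seq I) (F : I -> U) :
  f (\sum_(i <- r) F i) = \sum_(i <- r) f (F i).
Proof. elim: r => [|a r IH]; rewrite ?big_nil ?lin0 // !big_cons linD IH //. Qed.
End Lin.

Section Span.
Context {k : fieldType} {U : lmodType k}.
Definition span (xs : seq U) (u : U) :=
  exists c : nat -> k, u = \sum_(i < size xs) c i *: xs`_i.

Lemma span_subsp xs : subsp (span xs).
Proof.
split; first by exists (fun _ => 0); rewrite big1 // => i _; rewrite scale0r.
move=> c u v [c1 ->] [c2 ->]; exists (fun i => c * c1 i + c2 i).
rewrite scaler_sumr -big_split /=; apply: eq_bigr => i _.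
by rewrite scalerDl scalerA.
Qed.

Lemma span_mem xs j : (j < size xs)%N -> span xs xs`_j.
Proof.
move=> lj; exists (fun i => if i == j then 1 else 0).
rewrite (bigD1 (Ordinal lj)) //= eqxx scale1r big1 ?addr0 // => i.
by rewrite -val_eqE /= => /negbTE ->; rewrite scale0r.
Qed.

Lemma span_nil u : span [::] u -> u = 0.
Proof. by move=> [c ->]; rewrite big_ord0. Qed.

Lemma span_cons x0 xs u : span (x0 :: xs) u ->
  exists c w, span xs w /\ u = c *: x0 + w.
Proof.
move=> [c ->]; rewrite big_ord_recl /=.
exists (c 0%N), (\sum_(i < size xs) c (bump 0 i) *: xs`_i); split => //.
by exists (fun i => c i.+1).
Qed.

Lemma span_cons_sub x0 xs u : span xs x0 -> span (x0 :: xs) u -> span xs u.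
Proof.
move=> sx /span_cons [c [w [sw ->]]].
exact: (span_subsp xs).2 c x0 w sx sw.
Qed.

Lemma span_all (T : eqType) (s : seq (U * T)) p : p \in s -> span (map fst s) p.1.
Proof.
move=> ps; have ix : (index p s < size s)%N by rewrite index_mem.
rewrite -(nth_index p ps) -(nth_map p 0) //.
by apply: span_mem; rewrite size_map.
Qed.
Lemma span_all3 (T T' : eqType) (s : seq (U * T * T')) p : p \in s ->
  span (map (fun q => q.1.1) s) p.1.1.
Proof.
move=> ps; have ix : (index p s < size s)%N by rewrite index_mem.
rewrite -(nth_index p ps) -(nth_map p 0 (fun q => q.1.1)) //.
by apply: span_mem; rewrite size_map.
Qed.
End Span.

Section SepL.
Context {k : fieldType}.

Lemma sep_lin (U : lmodType k) (W : U -> Prop) x : subsp W -> ~ W x ->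
  exists f : {linear U -> k^o}, f x = 1 /\ forall w, W w -> f w = 0.
Proof.
move=> sW nWx; have [f [fL [fx fW]]] := @sep_fun _ _ W x sW nWx.
by exists (@mklin _ _ f fL).
Qed.

Lemma sep_pt (V : lmodType k) (v : V) :
  (forall f : {linear V -> k^o}, f v = 0) -> v = 0.
Proof.
move=> H; apply: contrapT => nv.
have sW : subsp (fun u : V => u = 0).
  by split => // c u w -> ->; rewrite scaler0 addr0.
have [f [fv _]] := @sep_lin _ _ _ sW nv.
by move: (H f); rewrite fv => /eqP; rewrite oner_eq0.
Qed.

Definition bil (U V W : lmodType k) (b : U -> V -> W) :=
  (forall y, lin (fun x => b x y)) /\ (forall x, lin (b x)).
Arguments bil {U V W}.

Definition Z2 (U V : lmodType k) (s : seq (U * V)) :=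
  forall (f : {linear U -> k^o}) (g : {linear V -> k^o}),
    \sum_(p <- s) (f p.1 : k) * g p.2 = 0.
Arguments Z2 {U V}.

Lemma Z2_ind (U V : lmodType k) n : forall (xs : seq U) (s : seq (U * V)),
  size xs = n -> (forall p, p \in s -> span xs p.1) -> Z2 s ->
  forall b : U -> V -> k^o, bil b -> \sum_(p <- s) b p.1 p.2 = 0.
Proof.
elim: n => [|n IH] xs s.
  move/size0nil => -> sp _ b [bl br]; rewrite big_seq big1 // => p /sp /span_nil ->.
  exact: (lin0 (bl p.2)).
case: xs => [//|x0 xs] [sz] sp Zs b [bl br].
have [x0s|nx0s] := pselect (span xs x0).
  apply: (IH xs) => // p /sp; exact: span_cons_sub.
have [f [fx fW]] := @sep_lin _ _ _ (span_subsp xs) nx0s.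
have decomp : forall u, span (x0 :: xs) u -> span xs (u - f u *: x0).
  move=> u /span_cons [c [w [sw ->]]].
  rewrite linearP /= fx (fW _ sw) addr0 [_ *: (1 : k^o)]mulr1 addrAC subrr add0r //.
have E : \sum_(p <- s) b p.1 p.2 =
   b x0 (\sum_(p <- s) f p.1 *: p.2) +
   \sum_(p <- map (fun p => (p.1 - f p.1 *: x0, p.2)) s) b p.1 p.2.
  rewrite (lin_sum (br x0)) big_map -big_split /=; apply: eq_bigr => p _.
  rewrite (linZ (br x0)) -(linZ (bl p.2)) -(linD (bl p.2)) addrC subrK //.
rewrite E; have -> : \sum_(p <- s) f p.1 *: p.2 = 0.
  apply: sep_pt => g; rewrite (lin_sum (fun c x y => linearP g c x y)).
  transitivity (\sum_(p <- s) (f p.1 : k) * g p.2); last exact: Zs f g.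
  by apply: eq_bigr => p _; rewrite linearZ.
rewrite (lin0 (br x0)) add0r; apply: (IH xs) => //.
- by move=> p /mapP [q qs ->] /=; apply: decomp; exact: sp.
- move=> f' g; rewrite big_map /=.
  under eq_bigr => p _ do rewrite linearB linearZ /= mulrBl.
  rewrite sumrB Zs; under eq_bigr => p _ do rewrite mulrAC.
  by rewrite -mulr_suml Zs mul0r subrr.
Qed.

Lemma lin_comp (U V W : lmodType k) (f : U -> V) (g : V -> W) :
  lin f -> lin g -> lin (fun x => g (f x)).
Proof. by move=> hf hg c x y; rewrite hf hg. Qed.

Lemma lin_linear (U V : lmodType k) (f : {linear U -> V}) : lin f.
Proof. by move=> c x y; rewrite linearP. Qed.

Lemma teq2_bil (U V W : lmodType k) (s t : seq (U * V)) (b : U -> V -> W) :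
  teq2 s t -> bil b -> \sum_(p <- s) b p.1 p.2 = \sum_(p <- t) b p.1 p.2.
Proof.
move=> st [bl br]; apply/eqP; rewrite -subr_eq0; apply/eqP; apply: sep_pt => phi.
pose s' := s ++ map (fun p => (- p.1, p.2)) t.
have Zs' : Z2 s'.
  move=> f g; rewrite big_cat big_map /= (st f g).
  under [X in _ + X = _]eq_bigr => p _ do rewrite linearN mulNr.
  by rewrite sumrN subrr.
have bp : bil (fun x y => phi (b x y)).
  split=> [y|x]; apply: lin_comp => //; exact: lin_linear.
have := Z2_ind (erefl _) (@span_all _ _ _ s') Zs' bp.
move=> H; rewrite -[RHS]H big_cat big_map /= linearB !(lin_sum (lin_linear phi)).
congr (_ + _); rewrite -sumrN; apply: eq_bigr => p _.
by rewrite (linN (bl p.2)) linearN.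
Qed.

Definition Z3 (U V W : lmodType k) (s : seq (U * V * W)) :=
  forall (f : {linear U -> k^o}) (g : {linear V -> k^o}) (h : {linear W -> k^o}),
    \sum_(p <- s) (f p.1.1 : k) * g p.1.2 * h p.2 = 0.
Arguments Z3 {U V W}.

Definition tril (U V W X : lmodType k) (t : U -> V -> W -> X) :=
  [/\ (forall y z, lin (fun x => t x y z)), (forall x z, lin (fun y => t x y z)) &
      (forall x y, lin (t x y))].
Arguments tril {U V W X}.

Lemma Z3_ind (U V W : lmodType k) n : forall (xs : seq U) (s : seq (U * V * W)),
  size xs = n -> (forall p, p \in s -> span xs p.1.1) -> Z3 s ->
  forall t : U -> V -> W -> k^o, tril t -> \sum_(p <- s) t p.1.1 p.1.2 p.2 = 0.
Proof.
elim: n => [|n IH] xs s.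
  move/size0nil => -> sp _ t [t1 t2 t3]; rewrite big_seq big1 // => p /sp /span_nil ->.
  exact: (lin0 (t1 _ _)).
case: xs => [//|x0 xs] [sz] sp Zs t [t1 t2 t3].
have [x0s|nx0s] := pselect (span xs x0).
  apply: (IH xs) => // p /sp; exact: span_cons_sub.
have [f [fx fW]] := @sep_lin _ _ _ (span_subsp xs) nx0s.
have decomp : forall u, span (x0 :: xs) u -> span xs (u - f u *: x0).
  move=> u /span_cons [c [w [sw ->]]].
  rewrite linearP /= fx (fW _ sw) addr0 [_ *: (1 : k^o)]mulr1 addrAC subrr add0r //.
pose s2 := map (fun p => (f p.1.1 *: p.1.2, p.2)) s.
have E : \sum_(p <- s) t p.1.1 p.1.2 p.2 =
   \sum_(p <- s2) t x0 p.1 p.2 +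
   \sum_(p <- map (fun p => (p.1.1 - f p.1.1 *: x0, p.1.2, p.2)) s) t p.1.1 p.1.2 p.2.
  rewrite !big_map -big_split /=; apply: eq_bigr => p _.
  rewrite (linZ (t2 _ _)) -(linZ (t1 p.1.2 p.2)) -(linD (t1 p.1.2 p.2)) addrC subrK //.
have bx0 : bil (t x0) by split=> [y|y]; [exact: t2|exact: t3].
have Zs2 : Z2 s2.
  move=> g h; rewrite big_map /=.
  transitivity (\sum_(p <- s) (f p.1.1 : k) * g p.1.2 * h p.2); last exact: Zs f g h.
  apply: eq_bigr => p _.
  by rewrite linearZ.
rewrite E (Z2_ind (erefl _) (@span_all _ _ _ s2) Zs2 bx0) add0r.
apply: (IH xs) => //.
- by move=> p /mapP [q qs ->] /=; apply: decomp; exact: sp.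
- move=> f' g h; rewrite big_map /=.
  under eq_bigr => p _ do rewrite linearB linearZ /= mulrBl mulrBl.
  rewrite sumrB Zs.
  transitivity (0 - (f' x0 : k) * \sum_(p <- s) (f p.1.1 : k) * g p.1.2 * h p.2);
    last by rewrite Zs mulr0 subrr.
  congr (_ - _); rewrite mulr_sumr; apply: eq_bigr => p _.
  rewrite /GRing.scale /=; ring.
Qed.

Lemma teq3_tril (U V W X : lmodType k) (s r : seq (U * V * W)) (t : U -> V -> W -> X) :
  teq3 s r -> tril t ->
  \sum_(p <- s) t p.1.1 p.1.2 p.2 = \sum_(p <- r) t p.1.1 p.1.2 p.2.
Proof.
move=> sr [t1 t2 t3]; apply/eqP; rewrite -subr_eq0; apply/eqP; apply: sep_pt => phi.
pose s' := s ++ map (fun p => (- p.1.1, p.1.2, p.2)) r.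
have Zs' : Z3 s'.
  move=> f g h; rewrite big_cat big_map /= (sr f g h).
  under [X in _ + X = _]eq_bigr => p _ do rewrite linearN !mulNr.
  by rewrite sumrN subrr.
have tp : tril (fun x y z => phi (t x y z)).
  split=> [y z|x z|x y]; apply: lin_comp => //; exact: lin_linear.
have := Z3_ind (erefl _) (@span_all3 _ _ _ _ s') Zs' tp.
move=> H; rewrite -[RHS]H big_cat big_map /= linearB !(lin_sum (lin_linear phi)).
congr (_ + _); rewrite -sumrN; apply: eq_bigr => p _.
by rewrite (linN (t1 _ _)) linearN.
Qed.
End SepL.
Arguments bil {k U V W}.
Arguments Z2 {k U V}.
Arguments Z3 {k U V W}.
Arguments tril {k U V W X}.

Section Aux.
Context {k : fieldType}.

Lemma lin_sumf (U V : lmodType k) (I : Type) (r : seq I) (F : I -> U -> V) :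
  (forall i, lin (F i)) -> lin (fun x => \sum_(i <- r) F i x).
Proof.
move=> hF c x y; rewrite scaler_sumr -big_split /=; apply: eq_bigr => i _.
exact: hF.
Qed.

Lemma lin_mull (A : algType k) (c : A) : lin (fun x : A => x * c).
Proof. by move=> a x y; rewrite mulrDl scalerAl. Qed.

Lemma lin_mulr (A : algType k) (c : A) : lin (fun x : A => c * x).
Proof. by move=> a x y; rewrite mulrDr scalerAr. Qed.

Lemma tlin_sum (U V W X : lmodType k) (d : U -> seq (V * W)) (b : V -> W -> X) :
  tlinear d -> bil b -> lin (fun x => \sum_(q <- d x) b q.1 q.2).
Proof.
move=> dl [bl br] c x y; rewrite (teq2_bil (dl c x y) (conj bl br)).
rewrite big_cat big_map /= scaler_sumr; congr (_ + _); apply: eq_bigr => q _.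
exact: (linZ (bl _)).
Qed.

Lemma sw3_morph (H K X : lmodType k) (dH : H -> seq (H * H)) (dK : K -> seq (K * K))
    (R : K -> H) (t : H -> H -> H -> X) a :
  tlinear dH -> (forall a, teq2 (dH (R a)) [seq (R p.1, R p.2) | p <- dK a]) ->
  tril t ->
  \sum_(q <- sw3 dH (R a)) t q.1.1 q.1.2 q.2
  = \sum_(q <- sw3 dK a) t (R q.1.1) (R q.1.2) (R q.2).
Proof.
move=> dHl Rm [t1 t2 t3]; rewrite /sw3 !big_flatten /= !big_map.
under eq_bigr => p _ do rewrite big_map /=.
under [RHS]eq_bigr => p _ do rewrite big_map /=.
pose G x z := \sum_(q <- dH x) t q.1 q.2 z.
have bG : bil G.
  split.
    move=> z; apply: (tlin_sum (b := fun u v => t u v z)) => //.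
  by move=> x; apply: lin_sumf => q; exact: t3.
rewrite (teq2_bil (Rm a) bG) big_map; apply: eq_bigr => p _.
rewrite /G (teq2_bil (Rm p.1) (b := fun u v => t u v (R p.2))) ?big_map //.
Qed.
End Aux.
Arguments lin_mull {k A} c.
Arguments lin_mulr {k A} c.

Theorem lemma4 (k : fieldType) (H K : algType k) (D : hopf_data H)
    (E : ydbim_data H K) (R : K -> H) (Rinv : H -> K) :
  is_hopf_alg D -> is_YD_bimonoid D E -> is_YD_rel_RB D E R Rinv ->
  (forall a : K,
      \sum_(p <- kdelta E a) YD_SK D E R Rinv p.1 * p.2 = keps E a *: 1
   /\ \sum_(p <- kdelta E a) p.1 * YD_SK D E R Rinv p.2 = keps E a *: 1)
  /\ is_YD_hopf_monoid D E (YD_SK D E R Rinv).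
Proof.
move=> hH hK hRB.
have hK' := hK.
case: hH => [[dHlin eHlin coassH cuH1 cuH2] dHmul [dH1 eHmul eH1] Slin antip].
case: hK => [[[acth actv act1v actmulv] _ _ _ _] [dKlin eKlin coassK cuK1 cuK2]
             [actmul act1 _ _] _ [eKmul eK1 dK1 dKmul]].
case: hRB => [[Rlin Rmor Reps RB1 RB2] RK KR RB3].
set dH := hdelta D in dHlin coassH cuH1 cuH2 dHmul dH1 antip Rmor RB3 *.
set dK := kdelta E in dKlin coassK cuK1 cuK2 dK1 dKmul Rmor RB1 RB2 *.
set act := kact E in acth actv act1v actmulv actmul act1 RB1 RB2 RB3 *.
set S := hS D in Slin antip RB2 RB3 *.
have Rinvlin : lin Rinv.
  by move=> c x y; apply: (can_inj RK); rewrite Rlin !KR.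
have Rinv1 : Rinv 1 = 1.
  apply: (can_inj RK); have := RB1 (Rinv 1) 1; rewrite KR mul1r => ->.
  rewrite -{1}(KR 1); apply: (congr1 R); rewrite -{1}(cuK2 (Rinv 1)); apply: eq_bigr => p _.
  by rewrite act1 -scalerAr mulr1 Reps.
have actl : forall v, lin (fun h => act h v) by move=> v c h h'; exact: acth.
have linSK : lin (YD_SK D E R Rinv).
  rewrite /YD_SK; apply: (tlin_sum (b := fun x y => act (R x) (Rinv (S (R y)))) dKlin); split => [y|x].
    exact: (lin_comp Rlin (actl _)).
  apply: (lin_comp _ (actv _)); apply: (lin_comp _ Rinvlin).
  exact: (lin_comp Rlin Slin).
have goal1 : forall a, \sum_(p <- dK a) YD_SK D E R Rinv p.1 * p.2 = keps E a *: 1.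
  move=> a.
  have T3 : tril (fun x y z => act x (Rinv (S y)) * Rinv z).
    split => [y z|x z|x y].
    - exact: (@lin_comp _ _ _ _ (fun h => act h (Rinv (S y))) (fun w => w * Rinv z) (actl _) (lin_mull _)).
    - exact: (@lin_comp _ _ _ _ (fun y => Rinv (S y)) (fun w => act x w * Rinv z) (lin_comp Slin Rinvlin) (lin_comp (actv x) (lin_mull _))).
    - exact: (@lin_comp _ _ _ _ Rinv (fun w => act x (Rinv (S y)) * w) Rinvlin (lin_mulr _)).
  have := @sw3_morph _ _ _ _ _ _ _ _ a dHlin Rmor T3.
  rewrite RB3 Reps => ->.
  rewrite /sw3 big_flatten big_map /YD_SK; apply: eq_bigr => p _.
  rewrite big_map mulr_suml /=; apply: eq_bigr => q _; by rewrite RK.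
have goal2 : forall a, \sum_(p <- dK a) p.1 * YD_SK D E R Rinv p.2 = keps E a *: 1.
  move=> a.
  have T3 : tril (fun x y z => x * act (R y) (Rinv (S (R z)))).
    split => [y z|x z|x y].
    - exact: (lin_mull (act (R y) (Rinv (S (R z))))).
    - exact: (@lin_comp _ _ _ _ (fun y => act (R y) (Rinv (S (R z)))) (fun w => x * w) (lin_comp Rlin (actl _)) (lin_mulr x)).
    - exact: (@lin_comp _ _ _ _ (fun z => Rinv (S (R z))) (fun w => x * act (R y) w) (lin_comp (lin_comp Rlin Slin) Rinvlin) (lin_comp (actv (R y)) (lin_mulr x))).
  transitivity (\sum_(t <- flatten [seq [seq (p.1, q.1, q.2) | q <- dK p.2] | p <- dK a])
                  t.1.1 * act (R t.1.2) (Rinv (S (R t.2)))).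
    rewrite big_flatten big_map; apply: eq_bigr => p _.
    by rewrite /YD_SK big_map mulr_sumr.
  rewrite -(teq3_tril (coassK a) T3) /sw3 big_flatten big_map.
  transitivity (\sum_(p <- dK a) Rinv (R p.1 * S (R p.2))).
    apply: eq_bigr => p _; rewrite big_map /=.
    by rewrite -{2}[S (R p.2)]KR RB1 RK.
  have B2 : bil (fun x y => Rinv (x * S y)).
    split => [y|x].
      exact: (@lin_comp _ _ _ _ (fun x => x * S y) Rinv (lin_mull _) Rinvlin).
    exact: (@lin_comp _ _ _ _ (fun y => x * S y) Rinv (lin_comp Slin (lin_mulr x)) Rinvlin).
  rewrite -(big_map (fun p => (R p.1, R p.2)) xpredT (fun p => Rinv (p.1 * S p.2))).
  rewrite -(teq2_bil (Rmor a) B2) -(lin_sum Rinvlin) (antip (R a)).2 Reps.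
  by rewrite (linZ Rinvlin) Rinv1.
have goals : forall a : K,
      \sum_(p <- kdelta E a) YD_SK D E R Rinv p.1 * p.2 = keps E a *: 1
   /\ \sum_(p <- kdelta E a) p.1 * YD_SK D E R Rinv p.2 = keps E a *: 1.
  by move=> a; split; [exact: goal1|exact: goal2].
by split => //; split.
Qed.
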